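(* Let $X$ be a countably infinite set. Let $\sigma$ be the map from the lattice $\mathrm{Cl}_{loc}(X)$ of local clones on $X$ into the lattice of partial clones of finite operations on $X$ which sends each local clone $\mathscr C$ to the set of all restrictions of operations of $\mathscr C$ to finite domains (i.e. all $f|_A$ with $f\in\mathscr C$ $n$-ary and $A\subseteq X^n$ finite). Then $\sigma$ is one-to-one and preserves arbitrary joins.
   Context: A clone on $X$ is a set of finitary operations $X^n\to X$ ($n\ge1$) containing all projections $\pi^n_k(x_1,\dots,x_n)=x_k$ and closed under composition. Giving $X$ the discrete topology and $X^{X^n}$ the product topology, a clone is local if for each $n$ its set of $n$-ary operations is closed in $X^{X^n}$; equivalently, an $n$-ary operation $g$ belongs to the clone whenever for every finite $B\subseteq X^n$ some $n$-ary operation of the clone agrees with $g$ on $B$. $\mathrm{Cl}_{loc}(X)$ is the complete lattice of local clones ordered by inclusion (join = smallest local clone containing the union). A partial operation of finite domain on $X$ is a map $A\to X$ with $A\subseteq X^n$ finite for some $n\ge1$. A partial clone of finite operations on $X$ is a set of partial operations of finite domain on $X$ containing all restrictions of projections to finite domains and closed under composition (where the composition $f(g_1,\dots,g_n)$ of partial operations is defined on those tuples where all $g_i$ are defined and $f$ is defined at the resulting tuple). The partial clones of finite operations on $X$, ordered by inclusion, form a complete lattice, whose join of a family is the smallest partial clone of finite operations containing its union. *)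

(* Defs.v *)
From mathcomp Require Import all_boot.
From Stdlib Require Import List.
Set Implicit Arguments. Unset Strict Implicit. Unset Printing Implicit Defensive.

Definition op (X : Type) := {n : nat & (('I_n -> X) -> X)}.
(* A partial operation of arity n: X^n -> option X (None = undefined). *)
Definition pop (X : Type) := {n : nat & (('I_n -> X) -> option X)}.

Definition proj (X : Type) (n : nat) (k : 'I_n) : ('I_n -> X) -> X := fun x => x k.

Definition clone (X : Type) (C : op X -> Prop) : Prop :=
  (forall o, C o -> 0 < projT1 o) /\
  (forall n (k : 'I_n), C (existT _ n (@proj X n k))) /\
  (forall n m (f : ('I_n -> X) -> X) (g : 'I_n -> ('I_m -> X) -> X),
      C (existT _ n f) -> (forall i, C (existT _ m (g i))) ->
      C (existT _ m (fun x => f (fun i => g i x)))).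

(* local: an n-ary g belongs to C whenever for every finite B ⊆ X^n
   (listed by s) some n-ary operation of C agrees with g on B. *)
Definition local_clone (X : Type) (C : op X -> Prop) : Prop :=
  clone C /\
  forall n (g : ('I_n -> X) -> X), 0 < n ->
    (forall s : list ('I_n -> X),
        exists f, C (existT _ n f) /\ forall x, In x s -> f x = g x) ->
    C (existT _ n g).

Definition loc_join (X : Type) (I : Type) (F : I -> op X -> Prop) : op X -> Prop :=
  fun o => forall D, local_clone D -> (forall i o', F i o' -> D o') -> D o.

Definition fin_dom (X : Type) n (h : ('I_n -> X) -> option X) : Prop :=
  exists s : list ('I_n -> X), forall x, h x <> None -> In x s.

Definition fin_restr (X : Type) n (f : ('I_n -> X) -> X)
    (h : ('I_n -> X) -> option X) : Prop :=
  fin_dom h /\ forall x v, h x = Some v -> v = f x.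

Definition is_pcomp (X : Type) n m (f : ('I_n -> X) -> option X)
    (g : 'I_n -> ('I_m -> X) -> option X) (h : ('I_m -> X) -> option X) : Prop :=
  forall x v, h x = Some v <->
    exists y : 'I_n -> X, (forall i, g i x = Some (y i)) /\ f y = Some v.

Definition partial_clone (X : Type) (P : pop X -> Prop) : Prop :=
  (forall p, P p -> 0 < projT1 p /\ fin_dom (projT2 p)) /\
  (forall n (k : 'I_n) h, 0 < n -> fin_restr (@proj X n k) h -> P (existT _ n h)) /\
  (forall n m (f : ('I_n -> X) -> option X) (g : 'I_n -> ('I_m -> X) -> option X)
      (h : ('I_m -> X) -> option X),
      P (existT _ n f) -> (forall i, P (existT _ m (g i))) -> is_pcomp f g h ->
      P (existT _ m h)).

Definition pclone_join (X : Type) (I : Type) (F : I -> pop X -> Prop) : pop X -> Prop :=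
  fun p => forall D, partial_clone D -> (forall i p', F i p' -> D p') -> D p.

Definition sigma (X : Type) (C : op X -> Prop) : pop X -> Prop :=
  fun p => exists f, C (existT _ (projT1 p) f) /\ fin_restr f (projT2 p).

(* Main.v *)
From Stdlib Require Import List Classical ClassicalEpsilon FunctionalExtensionality PropExtensionality.
Require Import Defs.
From mathcomp Require Import all_boot.
Set Implicit Arguments.

Definition restr {X : Type} {n : nat} (P : ('I_n -> X) -> Prop)
  (f : ('I_n -> X) -> X) : ('I_n -> X) -> option X :=
  fun x => if excluded_middle_informative (P x) then Some (f x) else None.

Lemma restr_some X n (P : ('I_n -> X) -> Prop) f x v :
  restr P f x = Some v -> P x /\ v = f x.
Proof. unfold restr; destruct (excluded_middle_informative (P x)); intro H; inversion H; auto. Qed.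
Arguments restr_some {X n P f x v}.

Lemma restr_in X n (P : ('I_n -> X) -> Prop) f x : P x -> restr P f x = Some (f x).
Proof. unfold restr; intro H; destruct (excluded_middle_informative (P x)); [reflexivity|contradiction]. Qed.

Lemma sigma_pc X (C : op X -> Prop) : local_clone C -> partial_clone (sigma C).
Proof.
  intros [[Ha [Hp Hc]] _]. split; [|split].
  - intros [n h] [f [Hf [Hd _]]]. split; [exact (Ha _ Hf)|exact Hd].
  - intros n k h _ Hr. exists (proj k). split; [apply Hp|exact Hr].
  - intros n m f g h [F [HF [_ HrF]]] Hg Hpc.
    assert (Hn : 0 < n) by exact (Ha _ HF).
    pose (i0 := Ordinal Hn).
    destruct (Hg i0) as [G0 [_ [[s Hs] _]]].
    simpl in *.
    pose (G := fun i => (proj1_sig (constructive_indefinite_description _ (Hg i)) : ('I_m -> X) -> X)).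
    assert (HG : forall i, C (existT _ m (G i)) /\ fin_restr (G i) (g i)).
    { intro i. exact (proj2_sig (constructive_indefinite_description _ (Hg i))). }
    exists (fun x => F (fun i => G i x)).
    split.
    + apply Hc; [exact HF|]. intro i. apply HG.
    + split.
      * exists s. intros x Hx. destruct (h x) as [v|] eqn:E; [|exfalso; apply Hx; first [exact E|reflexivity]].
        apply Hpc in E. destruct E as [y [Hy _]]. apply Hs. rewrite (Hy i0). discriminate.
      * intros x v E. apply Hpc in E. destruct E as [y [Hy Hf]].
        apply HrF in Hf. subst v. f_equal. apply functional_extensionality. intro i.
        destruct (HG i) as [_ [_ HGi]]. first [apply HGi; apply Hy | symmetry; apply HGi; apply Hy].
Qed.

Lemma sigma_inj X (C D : op X -> Prop) : local_clone C -> local_clone D ->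
  sigma C = sigma D -> forall o, C o -> D o.
Proof.
  intros [[Ha _] _] [_ HlD] E [n g] Hg.
  apply HlD; [exact (Ha _ Hg)|]. intro s.
  assert (H : sigma C (existT _ n (restr (fun x => List.In x s) g))).
  { exists g. split; [exact Hg|]. split.
    - exists s. intros x Hx; simpl in Hx. destruct (restr (fun x => List.In x s) g x) eqn:E1; [apply restr_some in E1; tauto|exfalso; apply Hx; first [exact E1|reflexivity]].
    - intros x v Hv. apply restr_some in Hv. tauto. }
  rewrite E in H. destruct H as [f [Hf [_ Hr]]]. exists f. split; [exact Hf|].
  intros x Hx. symmetry. apply Hr. apply restr_in. exact Hx.
Qed.

Lemma full_local X : local_clone (fun o : op X => 0 < projT1 o).
Proof.
  split; [split; [|split]|].
  - auto.
  - intros n k. simpl. destruct k as [k Hk]. simpl. apply (leq_ltn_trans (leq0n k) Hk).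
  - intros n m f g Hf Hg. simpl in *. exact (Hg (Ordinal Hf)).
  - intros n g Hn _. exact Hn.
Qed.

Lemma join_local X I (F : I -> op X -> Prop) :
  (forall i, local_clone (F i)) -> local_clone (loc_join F).
Proof.
  intro HFl.
  split; [split; [|split]|].
  - intros o Ho. apply (Ho _ (full_local X)). intros i o' Ho'.
    destruct (HFl i) as [[Ha _] _]. exact (Ha _ Ho').
  - intros n k D [[_ [Hp _]] _] _. apply Hp.
  - intros n m f g Hf Hg D HD HF. pose proof HD as [[_ [_ Hc]] _].
    apply Hc; [apply Hf; auto|]. intro i. apply Hg; auto.
  - intros n g Hn H D HD HF. pose proof HD as [_ Hl]. apply Hl; [exact Hn|].
    intro s. destruct (H s) as [f [Hf Ha]]. exists f. split; [apply Hf; auto|exact Ha].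
Qed.

Definition Dp {X I} (F : I -> op X -> Prop) : op X -> Prop :=
  fun o => 0 < projT1 o /\ forall h, fin_restr (projT2 o) h ->
     pclone_join (fun i => sigma (F i)) (existT _ (projT1 o) h).

Lemma Dp_local X I (F : I -> op X -> Prop) :
  (forall i, local_clone (F i)) -> local_clone (Dp F).
Proof.
  intro HFl. split; [split; [|split]|].
  - intros o [H _]. exact H.
  - intros n k. split.
    + simpl. destruct k as [k Hk]. apply (leq_ltn_trans (leq0n k) Hk).
    + simpl. intros h Hr P [_ [HP _]] _. apply (HP n k h); [|exact Hr].
      destruct k as [k Hk]. apply (leq_ltn_trans (leq0n k) Hk).
  - intros n m f g [Hn Hf] Hg. simpl in *.
    assert (Hm : 0 < m) by exact (proj1 (Hg (Ordinal Hn))).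
    split; [exact Hm|]. intros h [[s Hs] Hh] P HP HFP.
    pose (g' := fun i => restr (fun x => h x <> None) (g i)).
    pose (f' := restr (fun y => exists x, h x <> None /\ y = (fun i => g i x)) f).
    pose proof HP as [_ [_ Hc]].
    apply (Hc n m f' g' h).
    + apply (Hf f'); [|exact HP|exact HFP]. split.
      * exists (List.map (fun x => fun i => g i x) s). intros y Hy.
        destruct (f' y) eqn:E1; [|exfalso; apply Hy; first [exact E1|reflexivity]].
        apply restr_some in E1. destruct E1 as [[x0 [Hx ->]] _].
        apply (List.in_map (fun x1 i => g i x1)). apply Hs. exact Hx.
      * intros y v Hv. apply restr_some in Hv. tauto.
    + intro i. refine (proj2 (Hg i) (g' i) _ P HP HFP). split.
      * exists s. intros x Hx.
        destruct (g' i x) eqn:E1; [|exfalso; apply Hx; first [exact E1|reflexivity]].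
        apply restr_some in E1. apply Hs. tauto.
      * intros x v Hv. apply restr_some in Hv. tauto.
    + intros x v. split.
      * intro E. assert (Hx : h x <> None) by (rewrite E; discriminate).
        exists (fun i => g i x). split.
        -- intro i. apply restr_in. exact Hx.
        -- rewrite (Hh x v E). apply restr_in. exists x. split; auto.
      * intros [y [Hy Hf']].
        pose proof (restr_some (Hy (Ordinal Hn))) as [Hx _].
        assert (Ey : y = (fun i => g i x)).
        { apply functional_extensionality. intro i. apply (restr_some (Hy i)). }
        subst y. apply restr_some in Hf'. destruct Hf' as [_ ->].
        destruct (h x) as [w|] eqn:E2; [|exfalso; apply Hx; first [exact E2|reflexivity]].
        rewrite (Hh x w E2). reflexivity.
  - intros n g Hn H. split; [exact Hn|]. simpl. intros h [[s Hs] Hh].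
    destruct (H s) as [f [[_ Hf] Hfg]]. apply Hf. split.
    + exists s. exact Hs.
    + intros x v Hv. rewrite (Hh x v Hv). symmetry. apply Hfg. apply Hs. rewrite Hv. discriminate.
Qed.

Theorem proposition2p8 (X : Type) (Xcount : exists e : nat -> X, bijective e) :
  (forall C : op X -> Prop, local_clone C -> partial_clone (sigma C)) /\
  (forall C D : op X -> Prop, local_clone C -> local_clone D -> sigma C = sigma D -> C = D) /\
  (forall (I : Type) (F : I -> op X -> Prop), (forall i, local_clone (F i)) ->
     sigma (loc_join F) = pclone_join (fun i => sigma (F i))).
Proof.
  split; [|split].
  - exact (@sigma_pc X).
  - intros C D HC HD E. apply functional_extensionality. intro o.
    apply propositional_extensionality. split.
    + apply (@sigma_inj X C D HC HD E).
    + apply (@sigma_inj X D C HD HC (esym E)).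
  - intros I F HFl. apply functional_extensionality. intros [n h].
    apply propositional_extensionality. split.
    + intros [f [Hf Hr]].
      assert (HD : Dp F (existT _ n f)).
      { simpl in *. apply (Hf (Dp F)); [exact (@Dp_local X I F HFl)|]. intros i [k f0] Hf0. split.
        - destruct (HFl i) as [[Ha _] _]. exact (Ha _ Hf0).
        - intros h0 Hr0 P HP HFP. apply (HFP i). exists f0. split; [exact Hf0|exact Hr0]. }
      exact (proj2 HD h Hr).
    + intro H. apply H.
      * apply sigma_pc. apply (@join_local X I F HFl).
      * intros i [k h0] [f0 [Hf0 Hr0]]. exists f0. split; [|exact Hr0].
        intros D HD HFD. apply (HFD i). exact Hf0.
Qed.
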